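(* Let $G$ be an infinite discrete group, $B$ a unital C$^*$-algebra with action $\alpha:G\to\mathrm{Aut}(B)$, $A_1=B\rtimes_{\alpha,r}G$ with implementing unitaries $u_g$ ($g\in G$), $\phi_1$ a faithful $\alpha$-invariant state on $B$ extended to $A_1$ by vanishing on $Bu_g$ for $g\ne e$, $A_2$ a unital C$^*$-algebra with faithful state $\phi_2$, and $(A,\phi)=(A_1,\phi_1)*(A_2,\phi_2)$ the reduced free product. Then the family of subalgebras $\bigl(B,\,(u_g^*A_2u_g)_{g\in G}\bigr)$ of $A$ is free with respect to $\phi$.
   Context: Reduced free product: given unital C$^*$-algebras $A_\iota$ with states $\phi_\iota$ whose GNS representations are faithful, $(A,\phi)=*_{\iota}(A_\iota,\phi_\iota)$ is the unital C$^*$-algebra $A$ containing copies of the $A_\iota$, generated by their union, with a state $\phi$ whose GNS representation is faithful on $A$, restricting to $\phi_\iota$ on each $A_\iota$, such that $(A_\iota)_\iota$ is free with respect to $\phi$. A family of unital subalgebras $(S_\iota)_{\iota\in I}$ is free with respect to $\phi$ if $\phi(a_1\cdots a_n)=0$ whenever $n\ge1$, $a_j\in S_{\iota_j}\cap\ker\phi$ and consecutive indices $\iota_j\neq\iota_{j+1}$. Here the subalgebras in the family are indexed by $\{B\}\sqcup G$, so $u_g^*A_2u_g$ and $u_h^*A_2u_h$ for $g\ne h$ count as different members. *)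

(* Defs.v *)
From HB Require Import structures.
From mathcomp Require Import all_boot all_order all_algebra.
From mathcomp Require Import reals complex.
Set Implicit Arguments. Unset Strict Implicit. Unset Printing Implicit Defensive.
Import Order.TTheory GRing.Theory Num.Theory.
Local Open Scope ring_scope.

Record group_law (G : Type) (mul : G -> G -> G) (inv : G -> G) (e : G) : Prop := {
  gmulA : forall x y z, mul x (mul y z) = mul (mul x y) z;
  gmul1 : forall x, mul e x = x;
  gmulV : forall x, mul (inv x) x = e }.

Definition infinite_type (G : Type) : Prop :=
  forall (n : nat) (f : nat -> G), exists g : G, forall k, (k < n)%N -> f k <> g.

Section CStar.
Variable R : realType.
Local Notation C := R[i].

Record cstar_axioms (A : algType C) (star : A -> A) (nrm : A -> R) : Prop := {
  star_invol : forall x, star (star x) = x;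
  star_add : forall x y, star (x + y) = star x + star y;
  star_scale : forall (c : C) x, star (c *: x) = (c^*)%C *: star x;
  star_mul : forall x y, star (x * y) = star y * star x;
  nrm_ge0 : forall x, 0 <= nrm x;
  nrm_eq0 : forall x, nrm x = 0 -> x = 0;
  nrm_add : forall x y, nrm (x + y) <= nrm x + nrm y;
  nrm_scale : forall (c : C) x, (nrm (c *: x))%:C%C = `|c| * (nrm x)%:C%C;
  nrm_mul : forall x y, nrm (x * y) <= nrm x * nrm y;
  nrm_cstar : forall x, nrm (star x * x) = nrm x ^+ 2;
  nrm_complete : forall u : nat -> A,
    (forall eps : R, 0 < eps -> exists N, forall m n, (N <= m)%N -> (N <= n)%N ->
        nrm (u m - u n) < eps) ->
    exists l : A, forall eps : R, 0 < eps -> exists N, forall n, (N <= n)%N ->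
        nrm (u n - l) < eps }.

Record cstar_alg := CStarAlg {
  cs_alg :> algType C;
  cs_star : cs_alg -> cs_alg;
  cs_norm : cs_alg -> R;
  cs_ax : cstar_axioms cs_star cs_norm }.

Variable A : cstar_alg.
Local Notation "x ^#" := (cs_star x) (at level 2, format "x ^#").

Definition is_state (phi : A -> C) : Prop :=
  [/\ forall (c : C) x y, phi (c *: x + y) = c * phi x + phi y,
      forall x, 0 <= phi (x^# * x) & phi 1 = 1].

Definition faithful_on (phi : A -> C) (S : A -> Prop) : Prop :=
  forall a, S a -> phi (a^# * a) = 0 -> a = 0.

(* the GNS representation of phi restricted to the subalgebra D is faithful on D:
   pi(a) = 0 iff <pi(a) xi_x, pi(a) xi_x> = phi(x^* a^* a x) = 0 for all x in D *)
Definition GNS_faithful_on (phi : A -> C) (D : A -> Prop) : Prop :=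
  forall a, D a -> (forall x, D x -> phi (x^# * (a^# * a) * x) = 0) -> a = 0.

Definition cs_unitary (u : A) : Prop := u^# * u = 1 /\ u * u^# = 1.

Definition is_csubalg (S : A -> Prop) : Prop :=
  [/\ S 1,
      (forall x y, S x -> S y -> S (x + y)),
      (forall (c : C) x, S x -> S (c *: x)),
      (forall x y, S x -> S y -> S (x * y)) &
      (forall x, S x -> S (x^#))] /\
  (forall (u : nat -> A) l, (forall n, S (u n)) ->
        (forall eps : R, 0 < eps -> exists N, forall n, (N <= n)%N ->
           cs_norm (u n - l) < eps) -> S l).

Definition cgenerated (D T : A -> Prop) : Prop :=
  [/\ is_csubalg D, (forall x, T x -> D x) &
      forall S, is_csubalg S -> (forall x, T x -> S x) -> forall x, D x -> S x].

Definition free_family (I : Type) (phi : A -> C) (S : I -> A -> Prop) : Prop :=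
  forall (n : nat) (idx : nat -> I) (a : nat -> A),
    (0 < n)%N ->
    (forall j, (j < n)%N -> S (idx j) (a j) /\ phi (a j) = 0) ->
    (forall j, (j.+1 < n)%N -> idx j <> idx j.+1) ->
    phi (\prod_(j < n) a j) = 0.

End CStar.

(* Main.v *)
Require Import Defs.
From HB Require Import structures.
From mathcomp Require Import all_boot all_order all_algebra.
From mathcomp Require Import reals complex.
From Stdlib Require Import Classical_Prop.
Import Order.TTheory GRing.Theory Num.Theory.
Local Open Scope ring_scope.

Definition PL {R : realType} {A : cstar_alg R} (s : seq (bool * A)) : A :=
  \prod_(j < size s) (nth (true, 0) s j).2.

Definition ok0 {R : realType} {A : cstar_alg R} (phi : A -> R[i]) (A1 A2 : A -> Prop)
  (s : seq (bool * A)) : Prop :=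
  (forall i, (i < size s)%N -> (if (nth (true,0) s i).1 then A1 else A2) (nth (true,0) s i).2
       /\ phi (nth (true,0) s i).2 = 0) /\
  (forall i, (i.+1 < size s)%N -> (nth (true,0) s i).1 <> (nth (true,0) s i.+1).1).

Lemma PL_nil {R : realType} {A : cstar_alg R} : PL ([::] : seq (bool * A)) = 1.
Proof. by rewrite /PL big_ord0. Qed.

Lemma PL_rcons {R : realType} {A : cstar_alg R} (s : seq (bool * A)) p :
  PL (rcons s p) = PL s * p.2.
Proof.
rewrite /PL size_rcons big_ord_recr /= nth_rcons ltnn eqxx; congr (_ * _).
by apply: eq_bigr => i _; rewrite nth_rcons /= ltn_ord.
Qed.

Lemma ok0_nil {R : realType} {A : cstar_alg R} phi (A1 A2 : A -> Prop) : ok0 phi A1 A2 [::].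
Proof. by split. Qed.

Lemma ok0_rcons {R : realType} {A : cstar_alg R} phi (A1 A2 : A -> Prop) s (p : bool * A) :
  ok0 phi A1 A2 s -> (s = [::] \/ (last (true,0) s).1 = ~~ p.1) ->
  (if p.1 then A1 else A2) p.2 -> phi p.2 = 0 -> ok0 phi A1 A2 (rcons s p).
Proof.
move=> [H1 H2] Hl Hm Hp; split.
- move=> i; rewrite size_rcons ltnS nth_rcons leq_eqVlt.
  case/orP => [/eqP ->|lt]; first by rewrite ltnn eqxx.
  by rewrite lt; apply: H1.
- move=> i; rewrite size_rcons ltnS !nth_rcons => hi.
  have -> : (i < size s)%N by [].
  case: (ltnP i.+1 (size s)) => [lt|ge]; first exact: H2.
  have Es : i.+1 = size s by apply/eqP; rewrite eqn_leq hi ge.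
  rewrite Es eqxx.
  case: Hl => [E|Hl]; first by rewrite E in Es.
  have -> : i = (size s).-1 by rewrite -Es.
  by rewrite nth_last Hl; case: (p.1).
Qed.

Lemma phi_PL {R : realType} {A : cstar_alg R} (phi : A -> R[i]) (A1 A2 : A -> Prop)
  (HF : free_family phi (fun b : bool => if b then A1 else A2)) s :
  ok0 phi A1 A2 s -> (0 < size s)%N -> phi (PL s) = 0.
Proof.
move=> [H1 H2] hs.
exact: (HF (size s) (fun j => (nth (true,0) s j).1) (fun j => (nth (true,0) s j).2) hs H1 H2).
Qed.

Theorem mainTheorem2
  (R : realType)
  (* infinite discrete group *)
  (G : Type) (gmul : G -> G -> G) (ginv : G -> G) (e : G)
  (HG : group_law gmul ginv e) (Hinf : infinite_type G)
  (* the ambient reduced free product A with state phi *)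
  (A : cstar_alg R) (phi : A -> R[i])
  (* B, its action alpha, the implementing unitaries u, A1 = B >< G, A2 *)
  (B A1 A2 : A -> Prop) (alpha : G -> A -> A) (u : G -> A)
  (* B is a unital C*-algebra, alpha an action of G by *-automorphisms of B *)
  (HB : is_csubalg B)
  (Halpha_hom : forall g, [/\ alpha g 1 = 1,
       forall x y, B x -> B y -> alpha g (x + y) = alpha g x + alpha g y,
       forall (c : R[i]) x, B x -> alpha g (c *: x) = c *: alpha g x,
       forall x y, B x -> B y -> alpha g (x * y) = alpha g x * alpha g y &
       forall x, B x -> alpha g (cs_star x) = cs_star (alpha g x)])
  (Halpha_bij : forall g, (forall x, B x -> B (alpha g x)) /\
       (forall y, B y -> exists2 x, B x & alpha g x = y))
  (Halpha_act : forall x, B x -> alpha e x = x)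
  (Halpha_mul : forall g h x, B x -> alpha (gmul g h) x = alpha g (alpha h x))
  (* A1 = B >< _{alpha,r} G, with implementing unitaries u_g *)
  (Hu_unit : forall g, cs_unitary (u g))
  (Hu_e : u e = 1)
  (Hu_mul : forall g h, u (gmul g h) = u g * u h)
  (Hu_cov : forall g x, B x -> u g * x * cs_star (u g) = alpha g x)
  (HA1 : cgenerated A1 (fun x => B x \/ exists g, x = u g))
  (* phi_1 := phi on A1: a faithful alpha-invariant state on B, extended by
     vanishing on B u_g (g <> e), whose GNS representation is faithful on A1
     (this characterises A1 as the reduced crossed product) *)
  (Hphi1_faith : faithful_on phi B)
  (Hphi1_inv : forall g x, B x -> phi (alpha g x) = phi x)
  (Hphi1_ext : forall g x, B x -> g <> e -> phi (x * u g) = 0)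
  (HA1_red : GNS_faithful_on phi A1)
  (* A2 a unital C*-algebra with faithful state phi_2 := phi on A2 *)
  (HA2 : is_csubalg A2)
  (Hphi2_faith : faithful_on phi A2)
  (* (A, phi) = (A1, phi_1) * (A2, phi_2), the reduced free product *)
  (Hphi : is_state phi)
  (HA_gen : cgenerated (fun _ => True) (fun x => A1 x \/ A2 x))
  (HA_red : GNS_faithful_on phi (fun _ => True))
  (HA_free : free_family phi (fun b : bool => if b then A1 else A2)) :
  free_family phi
    (fun i : option G => match i with
       | None => B
       | Some g => fun x => exists2 a, A2 a & x = cs_star (u g) * a * u g
       end).
Proof.
move=> n idx a n0 Hmem Halt.
case: Hphi => Hlin Hpos H1.
have phiD x y : phi (x + y) = phi x + phi y by have := Hlin 1 x y; rewrite scale1r mul1r.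
have phi0 : phi 0 = 0 by have := Hlin (-1) 0 0; rewrite scaler0 addr0 mulN1r addNr.
have phiZ c x : phi (c *: x) = c * phi x by have := Hlin c x 0; rewrite addr0 phi0 addr0.
case: HA1 => [[[A11 A1D A1Z A1M A1S] _] A1T _].
case: HB => [[B1 BD BZ BM BS] _].
case: HA2 => [[A21 A2D A2Z A2M A2S] _].
have BA1 x : B x -> A1 x by move=> hx; apply: A1T; left.
have uA1 g : A1 (u g) by apply: A1T; right; exists g.
case: HG => GA G1 GV.
have ustar g : cs_star (u g) = u (ginv g).
  have h : u (ginv g) * u g = 1 by rewrite -Hu_mul GV Hu_e.
  case: (Hu_unit g) => _ H2.
  by rewrite -[cs_star (u g)]mul1r -h -mulrA H2 mulr1.
have gRV x : gmul x (ginv x) = e.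
  have yy : gmul (gmul x (ginv x)) (gmul x (ginv x)) = gmul x (ginv x).
    by rewrite -GA (GA (ginv x) x (ginv x)) GV G1.
  set y := gmul x (ginv x) in yy *.
  by rewrite -(GV y) -{3}yy (GA (ginv y) y y) GV G1.
have gR1 x : gmul x e = x by rewrite -(GV x) GA gRV G1.
have gneq g h : g <> h -> gmul g (ginv h) <> e.
  by move=> ne E; apply: ne; rewrite -[g]gR1 -(GV h) GA E G1.
have ginve g : ginv g = e -> g = e by move=> E; rewrite -(GV g) E G1.
have star1 : cs_star (1 : A) = 1 by rewrite -Hu_e ustar -{1}(gR1 (ginv e)) GV.
have phiBu b g : B b -> phi b = 0 -> phi (b * u g) = 0.
  move=> hb pb; case: (classic (g = e)) => [->|ne]; first by rewrite Hu_e mulr1.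
  exact: Hphi1_ext.
have phiu g : g <> e -> phi (u g) = 0.
  by move=> ne; rewrite -[u g]mul1r; apply: Hphi1_ext.
have uB g b : B b -> u g * b = alpha g b * u g.
  move=> hb; rewrite -Hu_cov // -mulrA; case: (Hu_unit g) => -> _; by rewrite mulr1.
have alB g b : B b -> B (alpha g b) by move=> hb; case: (Halpha_bij g) => H _; apply: H.
have phiuB b g : B b -> phi b = 0 -> phi (u g * b) = 0.
  by move=> hb pb; rewrite uB //; apply: phiBu; [apply: alB | rewrite Hphi1_inv].
have phiuBu b g h : B b -> phi b = 0 -> phi (u g * b * cs_star (u h)) = 0.
  move=> hb pb; rewrite uB // ustar -mulrA -Hu_mul.
  by apply: phiBu; [apply: alB | rewrite Hphi1_inv].
have phiBus b h : B b -> phi b = 0 -> phi (b * cs_star (u h)) = 0.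
  by move=> hb pb; rewrite ustar; apply: phiBu.
have phiuu g h : g <> h -> phi (u g * cs_star (u h)) = 0.
  by move=> ne; rewrite ustar -Hu_mul; apply: phiu; apply: gneq.
have phic c g : A2 c -> phi (cs_star (u g) * c * u g) = 0 -> phi c = 0.
  move=> hc; case: (classic (g = e)) => [->|ne].
    by rewrite Hu_e star1 mul1r mulr1.
  set c0 := c - phi c *: 1.
  have hc0 : A2 c0 by rewrite /c0 -scaleNr; apply: A2D => //; apply: A2Z.
  have pc0 : phi c0 = 0 by rewrite /c0 -scaleNr phiD phiZ H1 mulr1 addrN.
  have E : cs_star (u g) * c * u g = phi c *: 1 + cs_star (u g) * c0 * u g.
    rewrite /c0 mulrBr mulrBl -scalerAr mulr1 -scalerAl.
    by case: (Hu_unit g) => -> _; rewrite addrC subrK.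
  have F : phi (cs_star (u g) * c0 * u g) = 0.
    have := @phi_PL _ _ phi A1 A2 HA_free (rcons (rcons (rcons [::] (true, cs_star (u g))) (false, c0)) (true, u g)).
    rewrite !PL_rcons PL_nil mul1r; apply.
      apply: ok0_rcons; [apply: ok0_rcons; [apply: ok0_rcons|..]|..] => //=; try by left.
      - by apply: A1S.
      - by rewrite ustar; apply: phiu => /ginve.
      - by right.
      - by right.
      - by apply: phiu.
    by rewrite !size_rcons.
  by rewrite E phiD F addr0 phiZ H1 mulr1.
have getc j g : (j < n)%N -> idx j = Some g ->
    exists2 c, A2 c /\ phi c = 0 & a j = cs_star (u g) * c * u g.
  move=> hj E; have [] := Hmem j hj; rewrite E => -[c hc ->] pa.
  by exists c => //; split => //; apply: phic pa.
have getb j : (j < n)%N -> idx j = None -> B (a j) /\ phi (a j) = 0.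
  by move=> hj E; have := Hmem j hj; rewrite E.
have key : forall k, (k < n)%N ->
  match idx k with
  | None => k = 0%N \/ exists s g, [/\ ok0 phi A1 A2 s, (0 < size s)%N,
        (last (true,0) s).1 = false & \prod_(j < k.+1) a j = PL s * u g * a k]
  | Some g => exists s, [/\ ok0 phi A1 A2 s, (0 < size s)%N,
        (last (true,0) s).1 = false & \prod_(j < k.+1) a j = PL s * u g]
  end.
  elim=> [|k IH] hk.
  - rewrite big_ord1; case E: (idx 0%N) => [g|]; last by left.
    have [c [hc pc] ->] := getc 0%N g hk E.
    case: (classic (g = e)) => [Eg|ne].
    + exists (rcons [::] (false, c)); split.
      * by apply: ok0_rcons => //; try exact: ok0_nil; left.
      * by rewrite size_rcons.
      * by rewrite last_rcons.
      * by rewrite PL_rcons PL_nil mul1r Eg Hu_e star1 mul1r !mulr1.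
    + exists (rcons (rcons [::] (true, cs_star (u g))) (false, c)); split.
      * apply: ok0_rcons; [apply: ok0_rcons|..] => //; try by left.
        - by apply: A1S.
        - by rewrite ustar; apply: phiu => /ginve.
        - by right; rewrite last_rcons.
      * by rewrite !size_rcons.
      * by rewrite last_rcons.
      * by rewrite !PL_rcons PL_nil mul1r ?mulrA.
  - have hk' : (k < n)%N by apply: ltnW.
    have IHk := IH hk'; have Hal := Halt k hk.
    rewrite big_ord_recr /=.
    case E1: (idx k.+1) => [h|].
    + have [c [hc pc] ->] := getc k.+1 h hk E1.
      rewrite E1 in Hal; move: IHk; case E0: (idx k) => [g|].
      * move=> [s [ok ps ls ->]].
        have ne : g <> h by move=> gh; apply: Hal; rewrite E0 gh.
        exists (rcons (rcons s (true, u g * cs_star (u h))) (false, c)); split.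
        - apply: ok0_rcons; [apply: ok0_rcons|..] => //.
          + by right; rewrite ls.
          + by apply: A1M => //; apply: A1S.
          + by apply: phiuu.
          + by right; rewrite last_rcons.
        - by rewrite !size_rcons.
        - by rewrite last_rcons.
        - by rewrite !PL_rcons /= ?mulrA.
      * case=> [k0|[s [g [ok ps ls ->]]]].
        - subst k; have [hb pb] := getb 0%N hk' E0.
          exists (rcons (rcons [::] (true, a 0%N * cs_star (u h))) (false, c)); split.
          + apply: ok0_rcons; [apply: ok0_rcons|..] => //; try by left.
            * by apply: A1M; [apply: BA1 | apply: A1S].
            * by apply: phiBus.
            * by right; rewrite last_rcons.
          + by rewrite !size_rcons.
          + by rewrite last_rcons.
          + by rewrite big_ord1 !PL_rcons PL_nil mul1r /= ?mulrA.
        - have [hb pb] := getb k hk' E0.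
          exists (rcons (rcons s (true, u g * a k * cs_star (u h))) (false, c)); split.
          + apply: ok0_rcons; [apply: ok0_rcons|..] => //.
            * by right; rewrite ls.
            * apply: (A1M); last by apply: A1S.
              by apply: (A1M) => //; apply: BA1.
            * by apply: phiuBu.
            * by right; rewrite last_rcons.
          + by rewrite !size_rcons.
          + by rewrite last_rcons.
          + by rewrite !PL_rcons /= ?mulrA.
    + have [hb pb] := getb k.+1 hk E1.
      rewrite E1 in Hal; move: IHk; case E0: (idx k) => [g|]; last by rewrite E0 in Hal.
      move=> [s [ok ps ls ->]]; right; exists s, g; split => //.
have hn1 : (n.-1 < n)%N by rewrite prednK.
move: (key _ hn1); rewrite prednK //.
case E: (idx n.-1) => [g|].
- move=> [s [ok ps ls ->]].
  case: (classic (g = e)) => [->|ne].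
    by rewrite Hu_e mulr1; apply: (@phi_PL _ _ phi A1 A2 HA_free).
  rewrite -[PL s * u g]/(PL s * (true, u g).2) -PL_rcons.
  apply: (@phi_PL _ _ phi A1 A2 HA_free); last by rewrite size_rcons.
  apply: ok0_rcons; [done | by right; rewrite ls | exact: uA1 | exact: phiu].
- case=> [n1|[s [g [ok ps ls ->]]]].
  + have [hb pb] := getb _ hn1 E.
    have hn : n = n.-1.+1 by rewrite prednK.
    by rewrite hn n1 big_ord1; rewrite n1 in pb.
  + have [hb pb] := getb _ hn1 E.
    rewrite -mulrA -[PL s * _]/(PL s * (true, u g * a n.-1).2) -PL_rcons.
    apply: (@phi_PL _ _ phi A1 A2 HA_free); last by rewrite size_rcons.
    apply: ok0_rcons; [done | by right; rewrite ls | by apply: (A1M) => //; apply: BA1 | by apply: phiuB].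
Qed.
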